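(* Let $X,Y$ be a section-pair, let $t\ge1$ be odd, and let $X_1,Y_1;\dots;X_t,Y_t$ be subsection pairs with the $X_i$ pairwise vertex-disjoint and the $Y_i$ pairwise vertex-disjoint, such that for all $1\le i<j\le t$, $X_i$ is above $X_j$ and $Y_i$ is below $Y_j$. Let $d_1,\dots,d_t\ge1$ be integers. Suppose that for each $1\le i\le t$ there are two paths $Q_i^R,Q_i^B$ in $H(X_i,Y_i)$ with $|Q_i^R|-|Q_i^B|\ge d_i$, which both go between $x_i^{t}$ and $y_i^{t}$ if $i$ is odd, and both go between $x_i^{b}$ and $y_i^{b}$ if $i$ is even. Let $D:=\max_{1\le i\le t}(|X_i|+|Y_i|)$. Then there are paths $P_1,\dots,P_{(t+3)/2}$ in $H(X,Y)$ between $x^{t}$ and $y^{t}$ such that $|P_{(t+3)/2}|-|P_1|\ge\sum_{i=1}^t d_i$ and $1\le |P_{i+1}|-|P_i|\le 2D$ for every $1\le i\le (t+1)/2$.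
   Context: A section-pair in a graph $G$ is a pair $X,Y$ of vertex-disjoint paths; the two endpoints of $X$ are designated its top $x^{t}$ and bottom $x^{b}$, and those of $Y$ its top $y^t$ and bottom $y^b$. For distinct $x_1,x_2\in X$, $x_1$ is above $x_2$ if $x_1$ is closer to $x^t$ along $X$ than $x_2$, otherwise below; similarly in $Y$. For vertex sets $A,B\subseteq X$ (or $\subseteq Y$), $A$ is above (resp. below) $B$ if every vertex of $A$ is above (resp. below) every vertex of $B$. A chord is an edge of $G$ with one endpoint in $X$ and one in $Y$. A subsection pair of $X,Y$ is a section-pair $X',Y'$ where $X'$ is a subpath of $X$ and $Y'$ a subpath of $Y$, with top of $X'$ its endpoint closer to $x^t$ and bottom the other one (similarly for $Y'$); $x_i^t,x_i^b,y_i^t,y_i^b$ denote the tops and bottoms of $X_i,Y_i$. For a section-pair $X',Y'$, $H(X',Y')$ is the graph with vertex set $V(X')\cup V(Y')$ whose edges are the edges of $X'$, the edges of $Y'$, and the chords with one endpoint in $X'$ and one in $Y'$. $|P|$ denotes the number of edges of a path $P$. *)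

(* Defs.v *)
From mathcomp Require Import all_boot all_order all_algebra.
Set Implicit Arguments. Unset Strict Implicit. Unset Printing Implicit Defensive.

(* A simple graph: a symmetric irreflexive relation e on a finite type V.
   A path is a nonempty duplicate-free sequence of vertices whose consecutive
   vertices are adjacent; its top is its head and its bottom its last vertex.
   |P| (number of edges) = size P - 1. *)
Section Defs.
Variable V : finType.

Definition is_path (adj : rel V) (p : seq V) : bool :=
  if p is x :: q then uniq p && path adj x q else false.

Definition path_between (adj : rel V) (p : seq V) (a b : V) : bool :=
  if p is x :: q then
    is_path adj p && (((x == a) && (last x q == b)) || ((x == b) && (last x q == a)))
  else false.

Definition section_pair (e : rel V) (X Y : seq V) : bool :=
  [&& is_path e X, is_path e Y & all (fun v => v \notin Y) X].

Definition subsection_pair (e : rel V) (X Y X' Y' : seq V) : bool :=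
  [&& section_pair e X' Y', infix X' X & infix Y' Y].

Definition above (X A B : seq V) : Prop :=
  forall u v, u \in A -> v \in B -> index u X < index v X.
Definition below (X A B : seq V) : Prop :=
  forall u v, u \in A -> v \in B -> index v X < index u X.

Definition path_edge (s : seq V) (u v : V) : bool :=
  ((u, v) \in zip s (behead s)) || ((v, u) \in zip s (behead s)).

Definition H_adj (e : rel V) (X Y : seq V) : rel V :=
  fun u v => [|| path_edge X u v, path_edge Y u v |
               e u v && (((u \in X) && (v \in Y)) || ((u \in Y) && (v \in X)))].

Definition H_path_between (e : rel V) (X Y p : seq V) (a b : V) : bool :=
  path_between (H_adj e X Y) p a b && all (fun v => (v \in X) || (v \in Y)) p.

Definition H_path_tops (e : rel V) (X Y p : seq V) : Prop :=
  exists x X0 y Y0, [/\ X = x :: X0, Y = y :: Y0 & H_path_between e X Y p x y].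

Definition H_path_bottoms (e : rel V) (X Y p : seq V) : Prop :=
  exists X0 x Y0 y, [/\ X = rcons X0 x, Y = rcons Y0 y & H_path_between e X Y p x y].

End Defs.

(* Main.v *)
Require Import Defs.
From mathcomp Require Import all_boot all_order all_algebra.
From mathcomp Require Import zify.
From Stdlib Require Import ClassicalEpsilon.
Set Implicit Arguments. Unset Strict Implicit. Unset Printing Implicit Defensive.

Section Gen.
Variable V : finType.
Implicit Types (s X Y : seq V) (u v : V).

Lemma zipbP s u v x0 :
  (u, v) \in zip s (behead s) ->
  exists k, [/\ k.+1 < size s, nth x0 s k = u & nth x0 s k.+1 = v].
Proof.
elim: s => [|x s IH] //=.
case: s IH => [|y r] IH //=.
rewrite in_cons => /orP [/eqP [-> ->]|H].
  by exists 0.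
have [k [Hk H1 H2]] := IH H.
by exists k.+1; split.
Qed.

Lemma zipb_nth s x0 k : k.+1 < size s ->
  (nth x0 s k, nth x0 s k.+1) \in zip s (behead s).
Proof.
elim: s k => [|x s IH] k //=.
case: s IH => [|y r] IH; first by case: k.
case: k => [|k] Hk /=; first by rewrite mem_head.
rewrite in_cons; apply/orP; right; exact: (IH k).
Qed.

Lemma path_edge_nth s x0 k : k.+1 < size s ->
  path_edge s (nth x0 s k) (nth x0 s k.+1).
Proof. by move=> Hk; rewrite /path_edge zipb_nth. Qed.

Lemma path_edge_sym s u v : path_edge s u v = path_edge s v u.
Proof. by rewrite /path_edge orbC. Qed.

Lemma nth_infix (p s q : seq V) x0 k : k < size s ->
  nth x0 (p ++ s ++ q) (size p + k) = nth x0 s k.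
Proof. by move=> Hk; rewrite nth_cat ltnNge leq_addr /= addKn nth_cat Hk. Qed.

Lemma path_edge_infix p s q u v :
  path_edge s u v -> path_edge (p ++ s ++ q) u v.
Proof.
case: s => [|x0 s']; first by rewrite /path_edge.
set s := x0 :: s'.
have H : forall a b, (a, b) \in zip s (behead s) -> path_edge (p ++ s ++ q) a b.
  move=> a b /(zipbP x0) [k [Hk <- <-]].
  rewrite -(@nth_infix p s q x0 k (ltnW Hk)) -(@nth_infix p s q x0 k.+1 Hk) addnS.
  apply: path_edge_nth; rewrite !size_cat; lia.
by rewrite /path_edge => /orP [/H //|/H]; rewrite path_edge_sym.
Qed.

Lemma index_infix p s q v : uniq (p ++ s ++ q) -> v \in s ->
  index v (p ++ s ++ q) = size p + index v s.
Proof.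
rewrite cat_uniq => /and3P [_ Hn _] Hv.
have Hvp : v \notin p.
  apply/negP => Hvp; move/hasP: Hn; apply; exists v => //; by rewrite mem_cat Hv.
by rewrite index_cat (negbTE Hvp) index_cat Hv.
Qed.

Definition seg (f : nat -> V) m len := [seq f k | k <- iota m.+1 len].

Lemma seg_path (R : rel V) f m len :
  (forall k, m <= k < m + len -> R (f k) (f k.+1)) -> path R (f m) (seg f m len).
Proof.
elim: len m => [|len IH] m H //=.
rewrite H ?addnS ?leqnn ?ltnS ?leq_addr //=.
apply: IH => k /andP [H1 H2]; apply: H; lia.
Qed.

Lemma seg_last f m len : last (f m) (seg f m len) = f (m + len).
Proof.
elim: len m => [|len IH] m /=; first by rewrite addn0.
by rewrite IH addnS.
Qed.

Lemma size_seg f m len : size (seg f m len) = len.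
Proof. by rewrite size_map size_iota. Qed.

Lemma mem_seg f m len v : v \in seg f m len -> exists k, m < k <= m + len /\ v = f k.
Proof.
move=> /mapP [k]; rewrite mem_iota => Hk ->; exists k; split => //; lia.
Qed.

Lemma seg_uniq f m len :
  {in [pred k | m < k <= m + len] &, injective f} -> uniq (seg f m len).
Proof.
move=> Hinj; rewrite map_inj_in_uniq ?iota_uniq //.
move=> a b; rewrite !mem_iota => Ha Hb; apply: Hinj; rewrite inE; lia.
Qed.

Definition inP X Y a b v :=
  ((v \in X) && (index v X <= a)) || ((v \in Y) && (b <= index v Y)).

Lemma inP_mono X Y a b a' b' v : a <= a' -> b' <= b -> inP X Y a b v -> inP X Y a' b' v.
Proof.
rewrite /inP => H1 H2 /orP [/andP [-> H]|/andP [-> H]]; apply/orP.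
  by left; apply: leq_trans H1.
by right; apply: leq_trans H.
Qed.

Definition Inv (R : rel V) X Y a b x w :=
  [&& uniq (x :: w), path R x w & all (inP X Y a b) (x :: w)].

Lemma extend R X Y a b a' b' x w B :
  Inv R X Y a b x w -> path R (last x w) B -> uniq B ->
  all (predC (inP X Y a b)) B -> all (inP X Y a' b') B -> a <= a' -> b' <= b ->
  Inv R X Y a' b' x (w ++ B).
Proof.
move=> /and3P [Hu Hp Ha] HB HBu HBn HBa H1 H2.
apply/and3P; split.
- rewrite -cat_cons cat_uniq Hu HBu /= andbT.
  apply/hasP => [[v HvB Hvw]].
  move/allP: HBn => /(_ v HvB) /negP; apply.
  by move/allP: Ha; apply.
- by rewrite cat_path Hp.
- rewrite -cat_cons all_cat HBa andbT.
  apply/allP => v Hv; apply: inP_mono H1 H2 _.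
  by move/allP: Ha; apply.
Qed.

End Gen.


Section Constr.
Variables (V : finType) (x0 : V) (R : rel V) (X Y : seq V) (t : nat)
  (qq : bool -> nat -> seq V) (ax bx ay byy : nat -> nat).

Definition hd i := if odd i then nth x0 X (ax i) else nth x0 Y (byy i).
Definition lst i := if odd i then nth x0 Y (ay i) else nth x0 X (bx i).
Definition region i v :=
  ((v \in X) && (ax i <= index v X <= bx i)) || ((v \in Y) && (ay i <= index v Y <= byy i)).

Hypothesis HXu : uniq X.
Hypothesis HYu : uniq Y.
Hypothesis HXY : forall v, v \in X -> v \notin Y.
Hypothesis HRX : forall k, k.+1 < size X -> R (nth x0 X k) (nth x0 X k.+1).
Hypothesis HRY : forall k, k.+1 < size Y -> R (nth x0 Y k.+1) (nth x0 Y k).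
Hypothesis Hbx : forall i, 1 <= i <= t -> ax i <= bx i < size X.
Hypothesis Hby : forall i, 1 <= i <= t -> ay i <= byy i < size Y.
Hypothesis Hord : forall i, 1 <= i -> i < t -> bx i < ax i.+1 /\ byy i.+1 < ay i.
Hypothesis Hq : forall b i, 1 <= i <= t -> exists r,
  [/\ qq b i = hd i :: r, path R (hd i) r, uniq (hd i :: r), last (hd i) r = lst i
    & all (region i) (hd i :: r)].

Ltac nsz := match goal with
 | |- is_true (leq ?a (@size _ ?s)) => change (is_true (leq a (size s)))
 end.

Definition asc a b := seg (nth x0 X) a (b - a).
Definition desc a b := seg (fun k => nth x0 Y (a - k)) 0 (a - b).

Lemma HYX v : v \in Y -> v \notin X.
Proof. by move=> Hv; apply/negP => /HXY; rewrite Hv. Qed.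

Lemma asc_step a b a' x w :
  Inv R X Y a b x w -> last x w = nth x0 X a -> a <= a' < size X ->
  Inv R X Y a' b x (w ++ asc a a') /\ last x (w ++ asc a a') = nth x0 X a'.
Proof.
move=> HI Hl /andP [H1 H2]; split; last first.
  rewrite last_cat Hl /asc seg_last; have -> : a + (a' - a) = a' by lia. by [].
apply: extend HI _ _ _ _ H1 (leqnn _).
- rewrite Hl; apply: seg_path => k Hk; apply: HRX; lia.
- apply: seg_uniq => i j; rewrite !inE => Hi Hj Heq; apply/eqP.
  rewrite -(@nth_uniq _ x0 X) ?Heq //; nsz; lia.
- apply/allP => v /mem_seg [k [Hk ->]] /=.
  have Hk' : k < size X by lia.
  rewrite /inP (negbTE (HXY (mem_nth _ Hk'))) index_uniq //=; lia.
- apply/allP => v /mem_seg [k [Hk ->]] /=.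
  have Hk' : k < size X by lia.
  rewrite /inP mem_nth // index_uniq //=; lia.
Qed.

Lemma desc_step a b b' x w :
  Inv R X Y a b x w -> last x w = nth x0 Y b -> b' <= b < size Y ->
  Inv R X Y a b' x (w ++ desc b b') /\ last x (w ++ desc b b') = nth x0 Y b'.
Proof.
move=> HI Hl /andP [H1 H2]; split.
  apply: extend HI _ _ _ _ (leqnn _) H1.
  - rewrite Hl; have -> : nth x0 Y b = nth x0 Y (b - 0) by rewrite subn0.
    apply: (seg_path (f := fun k => nth x0 Y (b - k))) => k Hk.
    have -> : b - k = (b - k.+1).+1 by lia.
    apply: HRY; lia.
  - apply: seg_uniq => i j; rewrite !inE => Hi Hj Heq.
    have : (b - i == b - j).
      rewrite -(@nth_uniq _ x0 Y) ?Heq //; nsz; lia.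
    lia.
  - apply/allP => v /mem_seg [k [Hk ->]] /=.
    have Hk' : b - k < size Y by lia.
    rewrite /inP (negbTE (HYX (mem_nth _ Hk'))) index_uniq //=; lia.
  - apply/allP => v /mem_seg [k [Hk ->]] /=.
    have Hk' : b - k < size Y by lia.
    rewrite /inP (negbTE (HYX (mem_nth _ Hk'))) mem_nth // index_uniq //=; lia.
rewrite last_cat Hl.
have -> : nth x0 Y b = nth x0 Y (b - 0) by rewrite subn0.
rewrite (seg_last (fun k => nth x0 Y (b - k))); have -> : b - (0 + (b - b')) = b' by lia. by [].
Qed.

Lemma q_step bo i a b x w :
  1 <= i <= t -> Inv R X Y a b x w -> last x w = hd i ->
  (if odd i then a <= ax i /\ byy i < b else a < ax i /\ byy i <= b) ->
  a <= bx i -> ay i <= b ->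
  Inv R X Y (bx i) (ay i) x (w ++ behead (qq bo i)) /\
  last x (w ++ behead (qq bo i)) = lst i.
Proof.
move=> Hi HI Hl Hc H1 H2.
have [r [-> Hp Hu Hlr Ha]] := @Hq bo i Hi.
have /andP [Hxi Hxs] := @Hbx i Hi.
have /andP [Hyi Hys] := @Hby i Hi.
rewrite /=; split; last by rewrite last_cat Hl.
apply: extend HI _ _ _ _ H1 H2.
- by rewrite Hl.
- by move: Hu => /andP [].
- apply/allP => v Hv /=.
  have Hvh : v != hd i.
    apply/eqP => Hvh; move: Hu => /andP [+ _]; by rewrite -Hvh Hv.
  have Hreg : region i v by move/allP: Ha; apply; rewrite inE Hv orbT.
  move: Hreg Hvh; rewrite /region /inP /hd.
  case/orP => /andP [Hv1 Hv2].
  + rewrite Hv1 (negbTE (HXY Hv1)) /= orbF.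
    case: (odd i) Hc => [] [Hc1 _] Hvh; last lia.
    have : index v X != ax i by apply: contra Hvh => /eqP <-; rewrite nth_index.
    lia.
  + rewrite Hv1 (negbTE (HYX Hv1)) /=.
    case: (odd i) Hc => [] [Hc1 Hc2] Hvh; first lia.
    have : index v Y != byy i by apply: contra Hvh => /eqP <-; rewrite nth_index.
    lia.
- apply/allP => v Hv.
  have Hreg : region i v by move/allP: Ha; apply; rewrite inE Hv orbT.
  move: Hreg; rewrite /region /inP => /orP [/andP [-> H]|/andP [-> H]];
   apply/orP; [left|right]; lia.
Qed.

Definition q c i := qq (c i) i.

Fixpoint w (c : nat -> bool) k : seq V :=
  if k is k'.+1 then
    w c k' ++ desc (ay k'.*2.+1) (byy k'.*2.+2) ++ behead (q c k'.*2.+2)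
      ++ asc (bx k'.*2.+2) (ax k'.*2.+3) ++ behead (q c k'.*2.+3)
  else asc 0 (ax 1) ++ behead (q c 1).

Lemma w_inv c k : k.*2.+1 <= t ->
  Inv R X Y (bx k.*2.+1) (ay k.*2.+1) (nth x0 X 0) (w c k) /\
  last (nth x0 X 0) (w c k) = nth x0 Y (ay k.*2.+1).
Proof.
elim: k => [|k IH] Ht /=.
  have H1 : 1 <= 1 <= t by lia.
  have /andP [Hxi Hxs] := @Hbx 1 H1.
  have /andP [Hyi Hys] := @Hby 1 H1.
  have HX0 : 0 < size X by lia.
  have HI0 : Inv R X Y 0 (size Y) (nth x0 X 0) [::].
    rewrite /Inv /= /inP andbT mem_nth //=.
    by rewrite index_uniq.
  have H01 : 0 <= ax 1 < size X by lia.
  have [HI1 Hl1] := asc_step HI0 erefl H01.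
  rewrite /= in HI1 Hl1.
  apply: (q_step (c 1) H1 HI1 Hl1) => /=; lia.
have Hk : k.*2.+1 <= t by rewrite doubleS in Ht; lia.
have [HI Hl] := IH Hk.
rewrite doubleS !catA.
set i := k.*2.+1 in HI Hl *.
have Hi1 : 1 <= i <= t by rewrite /i; lia.
have Hi2 : 1 <= i.+1 <= t by rewrite /i; rewrite doubleS in Ht; lia.
have Hi3 : 1 <= i.+2 <= t by rewrite /i; rewrite doubleS in Ht; lia.
have [Ho1 Ho1'] := @Hord i (ltac:(rewrite /i; lia)) (ltac:(rewrite /i; rewrite doubleS in Ht; lia)).
have [Ho2 Ho2'] := @Hord i.+1 (ltac:(rewrite /i; lia)) (ltac:(rewrite /i; rewrite doubleS in Ht; lia)).
have /andP [Hx1 Hx1'] := @Hbx i Hi1.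
have /andP [Hy1 Hy1'] := @Hby i Hi1.
have /andP [Hx2 Hx2'] := @Hbx i.+1 Hi2.
have /andP [Hy2 Hy2'] := @Hby i.+1 Hi2.
have /andP [Hx3 Hx3'] := @Hbx i.+2 Hi3.
have /andP [Hy3 Hy3'] := @Hby i.+2 Hi3.
have Hoi : odd i by rewrite /i /= odd_double.
have Hoi2 : odd i.+1 = false by rewrite oddS Hoi.
have Hoi3 : odd i.+2 = true by rewrite oddS oddS Hoi.
have [HI2 Hl2] := desc_step HI Hl (ltac:(lia) : byy i.+1 <= ay i < size Y).
have Hl2' : last (nth x0 X 0) (w c k ++ desc (ay i) (byy i.+1)) = hd i.+1.
  by rewrite Hl2 /hd Hoi2.
have HQ3 := q_step (c i.+1) Hi2 HI2 Hl2'.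
have [HI3 Hl3] := HQ3 ltac:(rewrite Hoi2; lia) ltac:(lia) ltac:(lia).
rewrite /lst Hoi2 in Hl3.
have [HI4 Hl4] := asc_step HI3 Hl3 (ltac:(lia) : bx i.+1 <= ax i.+2 < size X).
have Hl4' : last (nth x0 X 0) (w c k ++ desc (ay i) (byy i.+1) ++ behead (q c i.+1)
    ++ asc (bx i.+1) (ax i.+2)) = hd i.+2.
  by rewrite !catA Hl4 /hd Hoi3.
rewrite -!catA in HI4.
have HQ5 := q_step (c i.+2) Hi3 HI4 Hl4'.
have [HI5 Hl5] := HQ5 ltac:(rewrite Hoi3; lia) ltac:(lia) ltac:(lia).
rewrite !catA in HI5 Hl5.
split; first exact: HI5.
by rewrite Hl5 /lst Hoi3.
Qed.


Definition fullw c := w c t./2 ++ desc (ay t) 0.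

Lemma full_ok c : odd t ->
  Inv R X Y (bx t) 0 (nth x0 X 0) (fullw c) /\ last (nth x0 X 0) (fullw c) = nth x0 Y 0.
Proof.
move=> Ho.
have Ht : t./2.*2.+1 = t by rewrite -[RHS](odd_double_half t) Ho add1n.
have := @w_inv c t./2; rewrite Ht => /(_ (leqnn _)) [HI Hl].
have H1 : 1 <= t <= t by move: Ho; case: t => //= n _; lia.
have /andP [Hy1 Hy1'] := @Hby t H1.
exact: desc_step HI Hl (ltac:(lia) : 0 <= ay t < size Y).
Qed.

Lemma qsz b i : 1 <= i <= t -> size (behead (qq b i)) + 1 = size (qq b i).
Proof. by move=> Hi; have [r [-> _ _ _ _]] := @Hq b i Hi; rewrite /= addn1. Qed.

Lemma size_w c1 c2 k : k.*2.+1 <= t ->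
  ((size (w c1 k))%:Z - (size (w c2 k))%:Z =
   \sum_(1 <= i < k.*2.+2) ((size (q c1 i))%:Z - (size (q c2 i))%:Z))%R.
Proof.
elim: k => [|k IH] Ht.
  rewrite big_nat1 /= !size_cat.
  have H1 : 1 <= 1 <= t by lia.
  have := qsz (c1 1) H1; have := qsz (c2 1) H1; rewrite /q; lia.
rewrite doubleS big_nat_recr // big_nat_recr //= -IH; last by rewrite doubleS in Ht; lia.
rewrite !size_cat.
have H2 : 1 <= k.*2.+2 <= t by rewrite doubleS in Ht; lia.
have H3 : 1 <= k.*2.+3 <= t by rewrite doubleS in Ht; lia.
have := qsz (c1 k.*2.+2) H2; have := qsz (c2 k.*2.+2) H2.
have := qsz (c1 k.*2.+3) H3; have := qsz (c2 k.*2.+3) H3.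
rewrite /q; lia.
Qed.

Lemma size_full c1 c2 : odd t ->
  ((size (fullw c1))%:Z - (size (fullw c2))%:Z =
   \sum_(1 <= i < t.+1) ((size (q c1 i))%:Z - (size (q c2 i))%:Z))%R.
Proof.
move=> Ho.
have Ht : t./2.*2.+1 = t by rewrite -[RHS](odd_double_half t) Ho add1n.
rewrite /fullw !size_cat.
have := @size_w c1 c2 t./2; rewrite Ht => /(_ (leqnn _)).
lia.
Qed.

End Constr.


Section Aux.
Variable V : finType.

Definition orient (s : seq V) a := if head a s == a then s else rev s.

Lemma orient_ok (R : rel V) (Rs : symmetric R) s a b :
  path_between R s a b -> exists r, [/\ orient s a = a :: r, path R a r,
    uniq (a :: r), last a r = b & orient s a =i s].
Proof.
case: s => [|x s] //= /andP [/andP [Hu Hp] Hc].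
case Hx: (x == a).
  move/eqP: Hx => Hxa; subst x; exists s.
  rewrite /orient /= eqxx; split => //.
  by case/orP: Hc => /andP [/eqP Hab /eqP ->].
move: Hc; rewrite Hx /= => /andP [/eqP Hxb /eqP Hl].
have Hrev : rev (x :: s) = a :: rev (belast x s) by rewrite lastI rev_rcons Hl.
exists (rev (belast x s)); rewrite /orient /= Hx Hrev; split => //.
- have := rev_path R x s; rewrite Hl => ->.
  by rewrite (@eq_path _ _ R) // => u v; rewrite Rs.
- have Hu' : uniq (x :: s) by [].
  by rewrite -(rev_uniq (x :: s)) Hrev in Hu'.
- have : last a (rev (belast x s)) = last a (rev (x :: s)).
    by rewrite Hrev.
  by rewrite rev_cons last_rcons Hxb.
- by move=> v; rewrite -[v \in x :: s]mem_rev Hrev.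
Qed.

Lemma orient_size s a : size (orient s a) = size s.
Proof. by rewrite /orient; case: ifP => //; rewrite size_rev. Qed.

Lemma path_between_sym (R : rel V) s a b : path_between R s a b = path_between R s b a.
Proof.
case: s => //= x s; congr andb; apply/orP/orP; case => H; by [left|right].
Qed.

Lemma sub_facts (X s : seq V) x0 : uniq X -> infix s X -> s != [::] ->
  [/\ index (head x0 s) X <= index (head x0 s) X + (size s).-1 < size X,
      nth x0 X (index (head x0 s) X) = head x0 s,
      nth x0 X (index (head x0 s) X + (size s).-1) = last x0 s,
      forall v, v \in s -> (v \in X) &&
        (index (head x0 s) X <= index v X <= index (head x0 s) X + (size s).-1) &
      forall u v, path_edge s u v -> path_edge X u v].
Proof.
move=> Hu /infixP [p [q HX]] Hs; subst X.
case: s Hs Hu => [|h s] // _ Hu.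
have Hi : index h (p ++ (h :: s) ++ q) = size p.
  by rewrite (index_infix Hu (mem_head _ _)) /= eqxx addn0.
rewrite [head _ _]/= Hi; split.
- rewrite !size_cat; apply/andP; split; first exact: leq_addr.
  by rewrite ltn_add2l /= ltnS leq_addr.
- by rewrite -[size p]addn0 nth_infix.
- by rewrite nth_infix ?nth_last //= ltnSn.
- move=> v Hv; rewrite (index_infix Hu Hv) mem_cat mem_cat Hv orbT /=.
  have := index_mem v (h :: s); rewrite Hv /=; lia.
- move=> u v; exact: path_edge_infix.
Qed.

Lemma H_adj_sym (e : rel V) (Hs : symmetric e) (X Y : seq V) : symmetric (H_adj e X Y).
Proof.
move=> u v; rewrite /H_adj path_edge_sym (path_edge_sym Y) Hs.
by case: (u \in X); case: (v \in X); case: (u \in Y); case: (v \in Y).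
Qed.

Lemma H_adj_sub (e : rel V) (X Y X' Y' : seq V) :
  (forall u v, path_edge X' u v -> path_edge X u v) ->
  (forall u v, path_edge Y' u v -> path_edge Y u v) ->
  {subset X' <= X} -> {subset Y' <= Y} ->
  subrel (H_adj e X' Y') (H_adj e X Y).
Proof.
move=> HX HY SX SY u v; rewrite /H_adj => /or3P [/HX ->//|/HY ->|/andP [-> H]].
  by rewrite orbT.
apply/or3P; apply: Or33; move: H => /orP [/andP [H1 H2]|/andP [H1 H2]];
  apply/orP; [left|right]; apply/andP; split; by [apply: SX|apply: SY].
Qed.

End Aux.

Lemma sum_window (F : nat -> int) a b lo hi : a <= lo -> lo <= hi -> hi <= b ->
  (forall i, a <= i < b -> ~~ (lo <= i < hi) -> F i = 0%R) ->
  (\sum_(a <= i < b) F i = \sum_(lo <= i < hi) F i)%R.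
Proof.
move=> H1 H2 H3 H0.
rewrite (@big_cat_nat _ _ _ lo a b _ _ H1 (leq_trans H2 H3)) (@big_cat_nat _ _ _ hi lo b _ _ H2 H3) /=.
rewrite [X in (X + _)%R]big1_seq ?[X in (_ + (_ + X))%R]big1_seq ?GRing.add0r ?GRing.addr0 //.
  move=> i /andP [_]; rewrite mem_index_iota => Hi; apply: H0; lia.
move=> i /andP [_]; rewrite mem_index_iota => Hi; apply: H0; lia.
Qed.

Unset Implicit Arguments.
Import Order.TTheory GRing.Theory Num.Theory.

Lemma ne_mem (V : finType) (s : seq V) x0 : s != [::] -> head x0 s \in s /\ last x0 s \in s.
Proof. by case: s => // h r _; rewrite /= mem_head mem_last. Qed.

Lemma hpb_size (V : finType) (e : rel V) (Xi Yi Q : seq V) a b :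
  H_path_between e Xi Yi Q a b -> a != b ->
  (size Q <= size Xi + size Yi)%N /\ (2 <= size Q)%N.
Proof.
case/andP => Hpb Hall Hab; split.
  rewrite -size_cat; apply: uniq_leq_size.
    by case: Q Hpb {Hall} => // x s /andP [/andP [Hu _] _].
  by move=> v Hv; rewrite mem_cat; exact: (allP Hall).
case: Q Hpb {Hall} => [|x [|y s]] // /andP [_ H].
move: H => /orP [/andP [/eqP -> /eqP Hb]|/andP [/eqP -> /eqP Ha]].
  by move: Hb => /= Hb; rewrite Hb eqxx in Hab.
by move: Ha => /= Ha; rewrite Ha eqxx in Hab.
Qed.

Theorem lemma4p5 (V : finType) (e : rel V)
  (e_sym : symmetric e) (e_irr : irreflexive e)
  (X Y : seq V) (t : nat) (Xs Ys : nat -> seq V) (d : nat -> nat) :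
  section_pair e X Y ->
  odd t -> (1 <= t)%N ->
  (forall i, (1 <= i <= t)%N -> subsection_pair e X Y (Xs i) (Ys i)) ->
  (forall i j, (1 <= i <= t)%N -> (1 <= j <= t)%N -> i <> j ->
     all (fun v => v \notin Xs j) (Xs i) /\ all (fun v => v \notin Ys j) (Ys i)) ->
  (forall i j, (1 <= i)%N -> (i < j)%N -> (j <= t)%N ->
     above X (Xs i) (Xs j) /\ below Y (Ys i) (Ys j)) ->
  (forall i, (1 <= i <= t)%N -> (1 <= d i)%N) ->
  (forall i, (1 <= i <= t)%N ->
     exists QR QB : seq V,
       ((size QR)%:Z - (size QB)%:Z >= (d i)%:Z)%R /\
       (if odd i then H_path_tops e (Xs i) (Ys i) QR /\ H_path_tops e (Xs i) (Ys i) QB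
        else H_path_bottoms e (Xs i) (Ys i) QR /\ H_path_bottoms e (Xs i) (Ys i) QB)) ->
  let D := (\max_(1 <= i < t.+1) ((size (Xs i)).-1 + (size (Ys i)).-1))%N in
  exists P : nat -> seq V,
    (forall i, (1 <= i <= (t + 3)./2)%N -> H_path_tops e X Y (P i)) /\
    ((size (P ((t + 3)./2)))%:Z - (size (P 1%N))%:Z >= (\sum_(1 <= i < t.+1) d i)%:Z)%R /\
    (forall i, (1 <= i <= (t + 1)./2)%N ->
       (1 <= (size (P i.+1))%:Z - (size (P i))%:Z <= 2 * D%:Z)%R).
Proof.
move=> HXY Hodd Ht1 Hsub Hdisj Hord Hd HQ D.
case/and3P: (HXY) => HpX HpY HdXY.
have [xX [X0 HX]] : exists a s, X = a :: s by case: (X) HpX => // a s _; exists a, s.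
have [yY [Y0 HY]] : exists a s, Y = a :: s by case: (Y) HpY => // a s _; exists a, s.
set x0 := xX.
have HXu : uniq X by move: HpX; rewrite /is_path HX => /andP [].
have HYu : uniq Y by move: HpY; rewrite /is_path HY => /andP [].
have HXYd : forall v, v \in X -> v \notin Y by move/allP: HdXY.
pose Pq i (pr : seq V * seq V) :=
  ((size pr.1)%:Z - (size pr.2)%:Z >= (d i)%:Z)%R /\
  (if odd i then H_path_tops e (Xs i) (Ys i) pr.1 /\ H_path_tops e (Xs i) (Ys i) pr.2
   else H_path_bottoms e (Xs i) (Ys i) pr.1 /\ H_path_bottoms e (Xs i) (Ys i) pr.2).
have Hex : forall i, exists pr, (1 <= i <= t)%N -> Pq i pr.
  move=> i; case Hi: (1 <= i <= t)%N; last by exists ([::], [::]).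
  by have [QR [QB H]] := HQ i Hi; exists (QR, QB).
pose QQ i := proj1_sig (constructive_indefinite_description _ (Hex i)).
have HQQ : forall i, (1 <= i <= t)%N -> Pq i (QQ i).
  by move=> i; rewrite /QQ; case: (constructive_indefinite_description _ _).
pose ax i := index (head x0 (Xs i)) X.
pose bx i := (ax i + (size (Xs i)).-1)%N.
pose ay i := index (head x0 (Ys i)) Y.
pose byy i := (ay i + (size (Ys i)).-1)%N.
have Hsubi : forall i, (1 <= i <= t)%N ->
    [/\ section_pair e (Xs i) (Ys i), infix (Xs i) X & infix (Ys i) Y].
  by move=> i /Hsub /and3P.
have HXne : forall i, (1 <= i <= t)%N -> Xs i != [::].
  by move=> i /Hsubi [/and3P [] + _ _ _ _]; case: (Xs i).
have HYne : forall i, (1 <= i <= t)%N -> Ys i != [::].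
  by move=> i /Hsubi [/and3P [] _ + _ _ _]; case: (Ys i).
have FX : forall i, (1 <= i <= t)%N ->
  [/\ (ax i <= bx i < size X)%N, nth x0 X (ax i) = head x0 (Xs i),
      nth x0 X (bx i) = last x0 (Xs i),
      forall v, v \in Xs i -> (v \in X) && (ax i <= index v X <= bx i)%N &
      forall u v, path_edge (Xs i) u v -> path_edge X u v].
  move=> i Hi; have [_ Hin _] := Hsubi i Hi; exact: sub_facts HXu Hin (HXne i Hi).
have FY : forall i, (1 <= i <= t)%N ->
  [/\ (ay i <= byy i < size Y)%N, nth x0 Y (ay i) = head x0 (Ys i),
      nth x0 Y (byy i) = last x0 (Ys i),
      forall v, v \in Ys i -> (v \in Y) && (ay i <= index v Y <= byy i)%N &
      forall u v, path_edge (Ys i) u v -> path_edge Y u v].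
  move=> i Hi; have [_ _ Hin] := Hsubi i Hi; exact: sub_facts HYu Hin (HYne i Hi).
have Hord' : forall i, (1 <= i)%N -> (i < t)%N -> (bx i < ax i.+1)%N /\ (byy i.+1 < ay i)%N.
  move=> i H1 H2.
  have Hi : (1 <= i <= t)%N by lia.
  have Hi' : (1 <= i.+1 <= t)%N by lia.
  have [Hab Hbl] := Hord i i.+1 H1 (ltnSn _) H2.
  have [/andP [Hx1 Hx2] Hxh Hxl _ _] := FX i Hi.
  have [/andP [Hy1 Hy2] Hyh Hyl _ _] := FY i.+1 Hi'.
  have [_ Hl1] := @ne_mem V _ x0 (HXne i Hi).
  have [Hh2 _] := @ne_mem V _ x0 (HXne i.+1 Hi').
  have [Hh3 _] := @ne_mem V _ x0 (HYne i Hi).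
  have [_ Hl4] := @ne_mem V _ x0 (HYne i.+1 Hi').
  split.
    have := Hab _ _ Hl1 Hh2; rewrite -Hxl index_uniq //.
  have := Hbl _ _ Hh3 Hl4; rewrite -Hyl index_uniq //.
pose R := H_adj e X Y.
have HRX : forall k, (k.+1 < size X)%N -> R (nth x0 X k) (nth x0 X k.+1).
  by move=> k Hk; rewrite /R /H_adj path_edge_nth.
have HRY : forall k, (k.+1 < size Y)%N -> R (nth x0 Y k.+1) (nth x0 Y k).
  by move=> k Hk; rewrite /R /H_adj (path_edge_sym Y) path_edge_nth ?orbT.
pose qq (b : bool) i := orient (if b then (QQ i).1 else (QQ i).2) (hd x0 X Y ax byy i).
have Hq : forall b i, (1 <= i <= t)%N -> exists r,
  [/\ qq b i = hd x0 X Y ax byy i :: r, path R (hd x0 X Y ax byy i) r,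
      uniq (hd x0 X Y ax byy i :: r), last (hd x0 X Y ax byy i) r = lst x0 X Y bx ay i
    & all (region X Y ax bx ay byy i) (hd x0 X Y ax byy i :: r)].
  move=> b i Hi.
  have [_ Hpq] := HQQ i Hi.
  have HQi : if odd i then H_path_tops e (Xs i) (Ys i) (if b then (QQ i).1 else (QQ i).2)
      else H_path_bottoms e (Xs i) (Ys i) (if b then (QQ i).1 else (QQ i).2).
    by case: b; case: (odd i) Hpq => [] [].
  set Q := if b then (QQ i).1 else (QQ i).2 in HQi *.
  have [/andP [Hx1 Hx2] Hxh Hxl HXm HXe] := FX i Hi.
  have [/andP [Hy1 Hy2] Hyh Hyl HYm HYe] := FY i Hi.
  have [a' [b' [Ha Hb Hpb Hall]]] : exists a' b', [/\ hd x0 X Y ax byy i = a',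
      lst x0 X Y bx ay i = b', path_between (H_adj e (Xs i) (Ys i)) Q a' b'
      & all (fun v => (v \in Xs i) || (v \in Ys i)) Q].
    rewrite /hd /lst; case Ho: (odd i) HQi.
      case=> x' [X0' [y' [Y0' [HXi HYi /andP [Hpb Hall]]]]].
      exists x', y'; split => //.
        by rewrite Hxh HXi.
      by rewrite Hyh HYi.
    case=> X0' [x' [Y0' [y' [HXi HYi /andP [Hpb Hall]]]]].
    exists y', x'; split => //.
    - by rewrite Hyl HYi last_rcons.
    - by rewrite Hxl HXi last_rcons.
    - by rewrite path_between_sym.
  have [r [Hor Hp Hu Hl Hmem]] := orient_ok (H_adj_sym e_sym (Xs i) (Ys i)) Hpb.
  exists r; rewrite Ha Hb; split => //.
  - by rewrite /qq -/Q Ha Hor.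
  - apply: sub_path Hp; apply: H_adj_sub HXe HYe _ _.
      by move=> v /HXm /andP [].
    by move=> v /HYm /andP [].
  - apply/allP => v Hv.
    have : v \in Q by rewrite -Hmem Hor.
    move/allP: Hall => Hall /Hall /orP [/HXm H|/HYm H]; rewrite /region H //.
    by rewrite orbT.
have Hbx : forall i, (1 <= i <= t)%N -> (ax i <= bx i < size X)%N.
  by move=> i /FX [].
have Hby : forall i, (1 <= i <= t)%N -> (ay i <= byy i < size Y)%N.
  by move=> i /FY [].
have Hsz : forall i, (1 <= i <= t)%N -> forall Q,
    (if odd i then H_path_tops e (Xs i) (Ys i) Q else H_path_bottoms e (Xs i) (Ys i) Q) ->
    (size Q <= size (Xs i) + size (Ys i))%N /\ (2 <= size Q)%N.
  move=> i Hi Q; have [_ _ _ HXm _] := FX i Hi; have [_ _ _ HYm _] := FY i Hi.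
  have Hne : forall a b, a \in Xs i -> b \in Ys i -> a != b.
    move=> a b /HXm /andP [Ha _] /HYm /andP [Hb _]; apply/eqP => Hab; subst.
    by move: (HXYd _ Ha); rewrite Hb.
  case: (odd i).
    case=> x' [X0' [y' [Y0' [HXi HYi Hpb]]]]; apply: (@hpb_size V e _ _ _ _ _ Hpb); apply: Hne;
      by rewrite ?HXi ?HYi mem_head.
  case=> X0' [x' [Y0' [y' [HXi HYi Hpb]]]]; apply: (@hpb_size V e _ _ _ _ _ Hpb); apply: Hne;
    by rewrite ?HXi ?HYi mem_rcons mem_head.
pose sR i := size (QQ i).1.
pose sB i := size (QQ i).2.
have Hdel : forall i, (1 <= i <= t)%N ->
    ((d i)%:Z <= (sR i)%:Z - (sB i)%:Z /\ (sR i)%:Z - (sB i)%:Z <= D%:Z)%R.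
  move=> i Hi; have [Hge Hpq] := HQQ i Hi; split => //.
  have HR : if odd i then H_path_tops e (Xs i) (Ys i) (QQ i).1
      else H_path_bottoms e (Xs i) (Ys i) (QQ i).1 by case: (odd i) Hpq => [] [].
  have HB : if odd i then H_path_tops e (Xs i) (Ys i) (QQ i).2
      else H_path_bottoms e (Xs i) (Ys i) (QQ i).2 by case: (odd i) Hpq => [] [].
  have [H1 _] := Hsz i Hi _ HR; have [_ H2] := Hsz i Hi _ HB.
  have HD : ((size (Xs i)).-1 + (size (Ys i)).-1 <= D)%N.
    apply: (@leq_bigmax_seq _ _ xpredT (fun i => ((size (Xs i)).-1 + (size (Ys i)).-1)%N) i) => //.
    rewrite mem_index_iota; lia.
  have H3 : (0 < size (Xs i))%N by case: (Xs i) (HXne i Hi).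
  have H4 : (0 < size (Ys i))%N by case: (Ys i) (HYne i Hi).
  rewrite /sR /sB; lia.
pose cm (m : nat) (i : nat) := (i + 3 <= m.*2)%N.
pose P m := nth x0 X 0 :: fullw x0 X Y t qq ax bx ay byy (cm m).
have Hsq : forall c i, size (q qq c i) = if c i then sR i else sB i.
  by move=> c i; rewrite /q /qq orient_size /sR /sB; case: (c i).
have Hdiff : forall m1 m2, ((size (P m1))%:Z - (size (P m2))%:Z =
    \sum_(1 <= i < t.+1) ((if cm m1 i then sR i else sB i)%:Z
                          - (if cm m2 i then sR i else sB i)%:Z))%R.
  move=> m1 m2; have := size_full HXu HYu Hq (cm m1) (cm m2) Hodd.
  under eq_bigr do rewrite !Hsq.
  rewrite /P /=; lia.
have Hx0 : nth x0 X 0 = xX by rewrite HX.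
have Hy0 : nth x0 Y 0 = yY by rewrite HY.
exists P; split; [|split].
- move=> m Hm.
  have [HI Hl] := full_ok HXu HYu HXYd HRX HRY Hbx Hby Hord' Hq (cm m) Hodd.
  case/and3P: HI => Hu Hp Ha.
  rewrite Hx0 in Hu Hp Ha Hl.
  exists xX, X0, yY, Y0; split => //.
  rewrite /H_path_between /P Hx0.
  apply/andP; split.
    apply/andP; split; first by apply/andP; split.
    by rewrite eqxx Hl Hy0 eqxx.
  apply/allP => v /(allP Ha); rewrite /inP => /orP [/andP [-> _]|/andP [-> _]] //.
  by rewrite orbT.
- rewrite Hdiff -natz natr_sum; apply: ler_sum_nat => i Hi.
  have Hi' : (1 <= i <= t)%N by lia.
  have [H1 _] := Hdel i Hi'.
  have -> : cm (t + 3)./2 i.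
    rewrite /cm; have := odd_double_half (t + 3).
    rewrite oddD Hodd /= => H; lia.
  have -> : cm 1%N i = false by rewrite /cm; lia.
  by rewrite natz.
- move=> m Hm; rewrite Hdiff.
  have Hz : forall lo hi, (1 <= lo)%N -> (lo <= hi)%N -> (hi <= t.+1)%N ->
      (forall i, (1 <= i < t.+1)%N -> ~~ (lo <= i < hi)%N -> cm m.+1 i = cm m i) ->
      (\sum_(1 <= i < t.+1) ((if cm m.+1 i then sR i else sB i)%:Z
                          - (if cm m i then sR i else sB i)%:Z) =
       \sum_(lo <= i < hi) ((if cm m.+1 i then sR i else sB i)%:Z
                          - (if cm m i then sR i else sB i)%:Z))%R.
    move=> lo hi H1 H2 H3 H0; apply: sum_window => // i Hi Hn.
    by rewrite (H0 i Hi Hn) subrr.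
  have Hdm : (0 <= D%:Z)%R by [].
  case: (ltnP m 2) => Hm2.
    have Hm1 : m = 1%N by lia.
    have H0 : forall i, (1 <= i < t.+1)%N -> ~~ (1 <= i < 2)%N -> cm m.+1 i = cm m i.
      move=> i Hi Hn; rewrite /cm Hm1.
      have -> : (i + 3 <= 4)%N = false by lia.
      by have -> : (i + 3 <= 2)%N = false by lia.
    rewrite (Hz 1%N 2%N (leqnn _) (ltac:(lia)) (ltac:(lia)) H0) Hm1.
    rewrite big_nat1.
    have -> : cm 2%N 1%N by [].
    have -> : cm 1%N 1%N = false by [].
    have [H1 H2] := Hdel 1%N (ltac:(lia)).
    have := Hd 1%N (ltac:(lia)).
    lia.
  rewrite (Hz (m.*2 - 2)%N m.*2); first last.
  - move=> i Hi Hn; rewrite /cm; apply/idP/idP => H; lia.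
  - lia.
  - lia.
  - lia.
  have Hhi : m.*2 = (m.*2 - 2).+2 by lia.
  set lo := (m.*2 - 2)%N in Hhi *.
  rewrite Hhi big_nat_recr // big_nat1.
  have -> : cm m.+1 (m.*2 - 2)%N by rewrite /cm; lia.
  have -> : cm m (m.*2 - 2)%N = false by rewrite /cm; lia.
  have -> : cm m.+1 (m.*2 - 2).+1 by rewrite /cm; lia.
  have -> : cm m (m.*2 - 2).+1 = false by rewrite /cm; lia.
  have [H1 H2] := Hdel lo (ltac:(rewrite /lo; lia)).
  have [H3 H4] := Hdel lo.+1 (ltac:(rewrite /lo; lia)).
  have := Hd lo (ltac:(rewrite /lo; lia)).
  have := Hd lo.+1 (ltac:(rewrite /lo; lia)).
  move=> ? ?; rewrite /=; lia.
Qed.
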